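(* Let $n$ be a positive integer and let $A(n)=(a_{ij})_{i,j\in\mathbb{N}}$ be the greedy matrix described in the context. For every $k\geq 1$, the length of the $k$-th row of $A(n)$ is less than $2n^3-n(n-3)$.
   Context: $\mathbb{N}=\{1,2,3,\dots\}$. Fix a positive integer $n$. The infinite $\{0,1\}$-matrix $A(n)=(a_{ij})_{i,j\in\mathbb{N}}$ is defined recursively. Its entries are determined row by row (row $1$ first), and within each row from left to right, so that $a_{kl}$ is determined after all $a_{ij}$ with $i<k$ and all $a_{kj}$ with $j<l$. One sets $a_{kl}=1$ if and only if all of the following hold: (1) $\sum_{j<l}a_{kj}<n+1$; (2) $\sum_{i<k}a_{il}<n+1$; (3) there is no pair $(i,j)$ with $1\le i<k$, $1\le j<l$ and $a_{ij}=a_{il}=a_{kj}=1$. Otherwise $a_{kl}=0$. The length of a row $(a_{k1},a_{k2},\dots)$ containing at least one but finitely many ones is $l-f+1$, where $f$ and $l$ are the smallest and the largest column index $j$ with $a_{kj}=1$. *)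

(* Defs.v *)
(* Indices are 1-based: row/column 0 is a dummy (always false). *)
From mathcomp Require Import all_boot all_algebra.

(* [decide n g k p l]: value of a_{kl}, given the previous rows g (rows 1..k-1)
   and the prefix p = [a_{k1}; ...; a_{k,l-1}] of row k. *)
Definition decide (n : nat) (g : nat -> nat -> bool) (k : nat) (p : seq bool)
    (l : nat) : bool :=
  [&& count id p < n.+1,
      sumn [seq (g i l : nat) | i <- iota 1 k.-1] < n.+1 &
      ~~ has (fun i => has (fun j => [&& g i j, g i l & nth false p j.-1])
                           (iota 1 l.-1))
             (iota 1 k.-1)].

Fixpoint rowpre (n : nat) (g : nat -> nat -> bool) (k l : nat) : seq bool :=
  match l with
  | 0 => [::]
  | l'.+1 => let p := rowpre n g k l' in rcons p (decide n g k p l'.+1)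
  end.

Fixpoint grid (n k : nat) : nat -> nat -> bool :=
  match k with
  | 0 => fun _ _ => false
  | k'.+1 =>
      let g := grid n k' in
      fun i j => if i <= k' then g i j
                 else if (i == k'.+1) && (0 < j) then nth false (rowpre n g k'.+1 j) j.-1
                 else false
  end.

Definition A (n : nat) (k l : nat) : bool := grid n k k l.

(* Main.v *)
Require Import Defs.
From mathcomp Require Import all_boot all_algebra.
From mathcomp Require Import zify.
From Stdlib Require Import Classical.
Import GRing.Theory Num.Theory.

Lemma size_rowpre n g k m : size (rowpre n g k m) = m.
Proof. by elim: m => //= m IH; rewrite size_rcons IH. Qed.

Lemma nth_rowpre n g k m j : j < m ->
  nth false (rowpre n g k m) j = nth false (rowpre n g k j.+1) j.
Proof.
elim: m => // m IH; rewrite ltnS leq_eqVlt => /orP [/eqP -> //|Hj].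
by rewrite /= nth_rcons size_rowpre Hj IH.
Qed.

Lemma rowpre_last n g k j :
  nth false (rowpre n g k j.+1) j = decide n g k (rowpre n g k j) j.+1.
Proof. by rewrite /= nth_rcons size_rowpre ltnn eqxx. Qed.

Lemma A_S n k j : A n k.+1 j.+1 = nth false (rowpre n (grid n k) k.+1 j.+1) j.
Proof. by rewrite /A /= ltnn eqxx. Qed.

Lemma grid_A n k i j : i <= k -> grid n k i j = A n i j.
Proof.
elim: k i => [|k IH] i.
  by rewrite leqn0 => /eqP ->.
rewrite leq_eqVlt => /orP [/eqP -> //|Hi].
by rewrite /= -ltnS Hi IH.
Qed.

Lemma rowpre_A n k m :
  rowpre n (grid n k) k.+1 m = [seq A n k.+1 j | j <- iota 1 m].
Proof.
apply: (eq_from_nth (x0 := false)); first by rewrite size_rowpre size_map size_iota.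
move=> j; rewrite size_rowpre => Hj.
by rewrite nth_rowpre // (nth_map 0) ?size_iota // nth_iota // add1n A_S.
Qed.

Lemma A0l n j : A n 0 j = false. Proof. by []. Qed.
Lemma Ak0 n k : A n k 0 = false.
Proof. by case: k => // k; rewrite /A /= ltnn eqxx. Qed.

Lemma count_iota (F : nat -> bool) m : F 0 = false ->
  count F (iota 1 m) = \sum_(j < m.+1) F j.
Proof.
move=> F0; rewrite big_ord_recl F0 add0n.
rewrite -sumn_count sumnE big_map.
rewrite -(big_mkord xpredT (fun j => nat_of_bool (F j.+1))).
rewrite /index_iota subn0 -(addn0 1) iotaDl big_map.
by apply: eq_bigr => i _; rewrite add1n.
Qed.

Lemma Achar n k l : A n k.+1 l.+1 =
  [&& \sum_(j < l.+1) A n k.+1 j < n.+1, \sum_(i < k.+1) A n i l.+1 < n.+1 &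
      ~~ has (fun i => has (fun j => [&& A n i j, A n i l.+1 & A n k.+1 j])
                           (iota 1 l)) (iota 1 k)].
Proof.
rewrite A_S rowpre_last rowpre_A /decide /=.
rewrite count_map.
have -> : count (preim (A n k.+1) id) (iota 1 l) = \sum_(j < l.+1) A n k.+1 j.
  by rewrite count_iota //= Ak0.
have -> : sumn [seq (grid n k i l.+1 : nat) | i <- iota 1 k] = \sum_(i < k.+1) A n i l.+1.
  rewrite -(count_iota (fun i => A n i l.+1)) // -sumn_count; congr sumn; apply/eq_in_map => i.
  by rewrite mem_iota add1n ltnS => /andP [_ Hi]; rewrite grid_A.
congr [&& _, _ & ~~ _]; apply: eq_in_has => i; rewrite mem_iota add1n ltnS => /andP [_ Hi].
apply: eq_in_has => j; rewrite mem_iota add1n ltnS => /andP [Hj1 Hj].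
rewrite !grid_A // (nth_map 0) ?size_iota; last by case: j Hj1 Hj.
by rewrite nth_iota; [rewrite add1n prednK | case: j Hj1 Hj].
Qed.

Lemma Ach1 n K l : A n K l -> \sum_(j < l) A n K j <= n.
Proof.
case: K => [|K]; first by rewrite A0l. case: l => [|l]; first by rewrite Ak0.
by rewrite Achar ltnS => /and3P [h _ _].
Qed.

Lemma Ach2 n K l : A n K l -> \sum_(i < K) A n i l <= n.
Proof.
case: K => [|K]; first by rewrite A0l. case: l => [|l]; first by rewrite Ak0.
by rewrite Achar ltnS => /and3P [_ h _].
Qed.

Lemma Ach4 n K l : 0 < K -> 0 < l -> ~~ A n K l ->
  \sum_(j < l) A n K j <= n -> \sum_(i < K) A n i l <= n ->
  exists i j, [/\ i < K, j < l, A n i j, A n i l & A n K j].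
Proof.
case: K => [//|K]; case: l => [//|l] _ _.
rewrite Achar => H h1 h2; move: H; rewrite ltnS h1 ltnS h2 /= negbK.
case/hasP => i; rewrite mem_iota add1n => /andP [_ Hi].
case/hasP => j; rewrite mem_iota add1n => /andP [_ Hj] /and3P [a b c].
by exists i, j; split.
Qed.

Lemma sum_mono (F : nat -> nat) m p : m <= p ->
  \sum_(i < m) F i <= \sum_(i < p) F i.
Proof.
move=> H; rewrite -(subnKC H); elim: (p - m) => [|d IH]; first by rewrite addn0.
by rewrite addnS big_ord_recr /=; apply: leq_trans IH (leq_addr _ _).
Qed.

Lemma single M (F : 'I_M -> nat) (i : 'I_M) : F i <= \sum_(l < M) F l.
Proof. by rewrite (bigD1 i) //= leq_addr. Qed.

Lemma mask (F : nat -> nat) (P : pred nat) M s n : s < M -> 0 < F s -> ~~ P s ->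
  \sum_(l < M) F l <= n.+1 -> \sum_(l < M) F l * P l <= n.
Proof.
move=> Hs Fs Ps Ht.
rewrite (bigD1 (Ordinal Hs)) //= in Ht.
rewrite (bigD1 (Ordinal Hs)) //= (negbTE Ps) muln0 add0n.
have : \sum_(i < M | i != Ordinal Hs) F i * P i <= \sum_(i < M | i != Ordinal Hs) F i.
  by apply: leq_sum => i _; case: (P i); rewrite ?muln1 ?muln0.
move=> h; apply: leq_trans h _; rewrite -ltnS; apply: leq_trans Ht.
by rewrite -add1n leq_add2r.
Qed.

Lemma rowtot n K M : \sum_(j < M) A n K j <= n.+1.
Proof.
elim: M => [|M IH]; first by rewrite big_ord0.
rewrite big_ord_recr /=; case E: (A n K M).
  by move: (@Ach1 _ _ _ E); rewrite addn1 ltnS.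
by rewrite addn0.
Qed.

Lemma coltot n K j : \sum_(i < K) A n i j <= n.+1.
Proof.
elim: K => [|K IH]; first by rewrite big_ord0.
rewrite big_ord_recr /=; case E: (A n K j).
  by move: (@Ach2 _ _ _ E); rewrite addn1 ltnS.
by rewrite addn0.
Qed.

Lemma rowmask n i M s (P : pred nat) : A n i s -> s < M -> ~~ P s ->
  \sum_(l < M) A n i l * P l <= n.
Proof. by move=> H1 H2 H3; apply: (@mask (fun l => nat_of_bool (A n i l)) P M s) => //; [rewrite H1 | apply: rowtot]. Qed.

Lemma colmask n j K s (P : pred nat) : A n s j -> s < K -> ~~ P s ->
  \sum_(i < K) A n i j * P i <= n.
Proof. by move=> H1 H2 H3; apply: (@mask (fun i => nat_of_bool (A n i j)) P K s) => //; [rewrite H1 | apply: coltot]. Qed.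

Lemma row_bounded n k : exists N, forall j, A n k j -> j <= N.
Proof.
apply: NNPP => H.
have H' : forall N, exists j, N < j /\ A n k j.
  move=> N; apply: NNPP => H2; apply: H; exists N => j Aj.
  rewrite leqNgt; apply/negP => Hj; apply: H2; by exists j.
have : forall t, exists M, t <= \sum_(j < M) A n k j.
  elim=> [|t [M HM]]; first by exists 0.
  have [j [Hj Aj]] := H' M.
  exists j.+1; rewrite big_ord_recr /= Aj addn1 ltnS.
  apply: (leq_trans HM); apply: (sum_mono (fun i => nat_of_bool (A n k i))); exact: ltnW.
move=> /(_ n.+2) [M HM]; move: (rowtot n k M); lia.
Qed.

Lemma rows_bounded n K : exists N, forall i j, i < K -> A n i j -> j <= N.
Proof.
elim: K => [|K [N HN]]; first by exists 0.
have [N' HN'] := row_bounded n K.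
exists (maxn N N') => i j; rewrite ltnS leq_eqVlt => /orP [/eqP ->|Hi] Aij.
  by rewrite leq_max (HN' _ Aij) orbT.
by rewrite leq_max (HN _ _ Hi Aij).
Qed.

Lemma row_nonempty n k : 0 < k -> exists j, A n k j.
Proof.
move=> hk; apply: NNPP => H.
have [N HN] := rows_bounded n k.
have nA : forall j, ~~ A n k j by move=> j; apply/negP => Aj; apply: H; exists j.
have [||i [j [Hi Hj Aij Ail Akj]]] := @Ach4 n k N.+1 hk isT (nA _).
- by rewrite big1 // => j _; rewrite (negbTE (nA _)).
- by rewrite big1 // => i _; case E: (A n i N.+1) => //; move: (HN _ _ (ltn_ord i) E); rewrite ltnn.
- by move: (nA j); rewrite Akj.
Qed.

Lemma sum_ge (M : nat) (f : nat) : \sum_(l < M) (f <= l) = M - f.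
Proof.
elim: M => [|M IH]; first by rewrite big_ord0.
rewrite big_ord_recr /= IH; case: leqP => h /=; lia.
Qed.

Lemma sum_pos M (F : 'I_M -> nat) (i : 'I_M) : 0 < F i -> 0 < \sum_(l < M) F l.
Proof. by move=> H; apply: leq_trans H (single _ F i). Qed.

Lemma mul_le (a x y : nat) : (0 < a -> x <= y) -> a * x <= a * y.
Proof. by case: a => // a H; rewrite leq_mul2l H. Qed.

Lemma gt0_mul (a b : nat) : 0 < a * b -> 0 < a /\ 0 < b.
Proof. by rewrite muln_gt0 => /andP. Qed.

Theorem theorem3p1 (n : nat) (hn : 0 < n) (k : nat) (hk : 0 < k) :
  exists f l : nat,
    [/\ 0 < f <= l, A n k f, A n k l,
        (forall j, A n k j -> f <= j <= l) &
        (((l - f + 1)%N%:Z < 2 * n%:Z ^+ 3 - n%:Z * (n%:Z - 3))%R)].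
Proof.
have exP := row_nonempty n k hk.
have [f Af fmin] := @ex_minnP _ exP.
have [N HN] := row_bounded n k.
have [L AL Lmax] := @ex_maxnP _ _ exP HN.
have f0 : 0 < f by case: f Af fmin => //; rewrite Ak0.
have fL : f <= L by apply: Lmax.
exists f, L; split => //; [by rewrite f0 | by move=> j Aj; rewrite fmin ?Lmax |].
pose M := L.+1.
have LM : L < M by [].
have fM : f < M by rewrite ltnS.
pose Bv l := \sum_(s < M) \sum_(i < k) (A n k s * A n i s * A n i l * (s < l)).
pose Fp l := ~~ A n k l && (Bv l == 0).
have S1 : \sum_(l < M) (f <= l) <=
   \sum_(l < M) A n k l + \sum_(l < M) Bv l + \sum_(l < M) ((f <= l) * Fp l).
  rewrite -!big_split /=; apply: leq_sum => l _.
  rewrite /Fp; case: (A n k l); case: (f <= l); case: (Bv l) => [|b] //=; lia.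
have S2 := rowtot n k M.
have S3 : \sum_(l < M) Bv l <= n * (n * n).
  rewrite /Bv exchange_big /=.
  apply: (@leq_trans (\sum_(s < M) A n k s * (s < L) * (n * n))).
    apply: leq_sum => s _; rewrite exchange_big /=.
    case Aks: (A n k s); last first.
      by rewrite big1 // => i _; rewrite big1 // => l _; rewrite !mul0n.
    case sL: (s < L); last first.
      rewrite big1 // => i _; rewrite big1 // => l _.
      have -> : (s < l) = false.
        by apply/negbTE; rewrite -leqNgt; move: (ltn_ord l) sL; rewrite /M ltnS; lia.
      by rewrite muln0.
    apply: (@leq_trans (\sum_(i < k) A n i s * n)).
      apply: leq_sum => i _; case Ais: (A n i s); last first.
        by rewrite big1 // => l _; rewrite /= !muln0 !mul0n.
      rewrite /=; under eq_bigr => l _ do rewrite !mul1n.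
      rewrite mul1n.
      by apply: (@rowmask n i M s (fun l => s < l)) => //; rewrite ?ltnn ?ltn_ord.
    rewrite -big_distrl /= !mul1n leq_mul2r; apply/orP; right; exact: (@Ach2 _ _ _ Aks).
  rewrite -big_distrl /= leq_mul2r; apply/orP; right.
  by apply: (@rowmask n k M L (fun s => s < L)) => //; rewrite ltnn.
pose W i l := \sum_(i' < k) \sum_(j < M)
   (A n i' f * ((A n i' j * (j < f)) * ((A n i j * (i' < i)) * (A n i l * (f < l))))).
have S4a : n.+1 * \sum_(l < M) ((f <= l) * Fp l) <=
    \sum_(l < M) \sum_(i < k) ((f <= l) * Fp l * A n i l).
  rewrite big_distrr /=; apply: leq_sum => l _.
  rewrite -big_distrr /=.
  case Hfl: (f <= l); last by rewrite !mul0n muln0.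
  case HF: (Fp l); last by rewrite !mul0n muln0.
  rewrite !mul1n muln1.
  move: HF; rewrite /Fp => /andP [nAl /eqP B0].
  rewrite leqNgt; apply/negP; rewrite ltnS => Hc.
  have l0 : 0 < l by apply: leq_trans f0 Hfl.
  have lL : l <= L by rewrite -ltnS.
  have h1 : \sum_(j < l) A n k j <= n.
    apply: leq_trans _ (@Ach1 _ _ _ AL).
    by apply: (sum_mono (fun j => nat_of_bool (A n k j))).
  have [i [j [Hi Hj Aij Ail Akj]]] := @Ach4 n k l hk l0 nAl h1 Hc.
  have jM : j < M by apply: leq_trans Hj (ltnW (ltn_ord l)).
  have : 0 < Bv l.
    rewrite /Bv /=; apply: (@sum_pos _ _ (Ordinal jM)) => /=.
    by apply: (@sum_pos _ _ (Ordinal Hi)) => /=; rewrite Akj Aij Ail Hj.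
  by rewrite B0.
have S4b : \sum_(l < M) \sum_(i < k) ((f <= l) * Fp l * A n i l) <=
    \sum_(l < M) \sum_(i < k) W i l.
  apply: leq_sum => l _; apply: leq_sum => i _.
  case Hfl: (f <= l); last by rewrite /= ?muln0 ?mul0n.
  case HF: (Fp l); last by rewrite /= ?muln0 ?mul0n.
  case Ail: (A n i l); last by rewrite /= ?muln0 ?mul0n.
  move: HF; rewrite /Fp => /andP [nAl /eqP B0].
  have fl : f < l.
    by rewrite ltn_neqAle Hfl andbT; apply/eqP => E; move: nAl; rewrite -E Af.
  have nAif : ~~ A n i f.
    apply/negP => Aif.
    have : 0 < Bv l.
      rewrite /Bv /=; apply: (@sum_pos _ _ (Ordinal fM)) => /=.
      by apply: (@sum_pos _ _ i) => /=; rewrite Af Aif Ail fl.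
    by rewrite B0.
  have i0 : 0 < i by case: (i : nat) Ail => //; rewrite A0l.
  have h1 : \sum_(j < f) A n i j <= n.
    apply: leq_trans _ (@Ach1 _ _ _ Ail).
    by apply: (sum_mono (fun j => nat_of_bool (A n i j))).
  have h2 : \sum_(i' < i) A n i' f <= n.
    apply: leq_trans _ (@Ach2 _ _ _ Af).
    apply: (sum_mono (fun i' => nat_of_bool (A n i' f))); exact: ltnW.
  have [i' [j [Hi' Hj Ai'j Ai'f Aij]]] := @Ach4 n i f i0 f0 nAif h1 h2.
  have i'k : i' < k by apply: ltn_trans Hi' (ltn_ord i).
  have jM : j < M by apply: ltn_trans Hj fM.
  rewrite /W; apply: (@sum_pos _ _ (Ordinal i'k)) => /=.
  apply: (@sum_pos _ _ (Ordinal jM)) => /=.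
  by rewrite Ai'f Ai'j Hj Aij Hi' Ail fl.
have S4c : \sum_(l < M) \sum_(i < k) W i l <= n * (n * (n * n)).
  rewrite /W exchange_big /=.
  under eq_bigr => i _ do rewrite exchange_big /=.
  under eq_bigr => i _ do under eq_bigr => i' _ do rewrite exchange_big /=.
  rewrite exchange_big /=.
  under eq_bigr => i' _ do rewrite exchange_big /=.
  apply: (@leq_trans (\sum_(i' < k) \sum_(j < M) \sum_(i < k)
      A n i' f * ((A n i' j * (j < f)) * ((A n i j * (i' < i)) * n)))).
    apply: leq_sum => i' _; apply: leq_sum => j _; apply: leq_sum => i _.
    rewrite -!big_distrr /=.
    apply: mul_le => _; apply: mul_le => /gt0_mul [_ hjf]; apply: mul_le => /gt0_mul [hij _].
    rewrite lt0b in hjf; rewrite lt0b in hij.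
    apply: (@rowmask n i M j (fun l => f < l)) => //.
    by rewrite -leqNgt ltnW.
  apply: (@leq_trans (\sum_(i' < k) \sum_(j < M)
      A n i' f * ((A n i' j * (j < f)) * (n * n)))).
    apply: leq_sum => i' _; apply: leq_sum => j _.
    rewrite -big_distrr /= -big_distrr /= -big_distrl /=.
    apply: mul_le => _; apply: mul_le => /gt0_mul [hi'j _].
    rewrite lt0b in hi'j.
    rewrite leq_mul2r; apply/orP; right.
    by apply: (@colmask n j k i' (fun i => i' < i)) => //; rewrite ltnn.
  apply: (@leq_trans (\sum_(i' < k) A n i' f * (n * (n * n)))).
    apply: leq_sum => i' _.
    rewrite -big_distrr /= -big_distrl /=.
    apply: mul_le => hi'f.
    rewrite lt0b in hi'f.
    rewrite leq_mul2r; apply/orP; right.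
    by apply: (@rowmask n i' M f (fun j => j < f)) => //; rewrite ltnn.
  rewrite -big_distrl /= leq_mul2r; apply/orP; right; exact: (@Ach2 _ _ _ Af).
rewrite sum_ge in S1.
have T : L - f + 1 <= n.+1 + n * (n * n) + \sum_(l < M) ((f <= l) * Fp l).
  have -> : L - f + 1 = M - f by rewrite /M; lia.
  lia.
have HF := leq_trans S4a (leq_trans S4b S4c).
move: T HF; move: (\sum_(l < M) ((f <= l) * Fp l)) => Fc T HF.
nia.
Qed.
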